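(* Let $H$ be a finite, connected, simple planar map with at least $3$ vertices. Let $LD(H)$ be the number of vertices of $H$ of degree at most $5$, and let $ME(H)=\sum_f(\deg[f]-3)$, the sum over all faces $f$ of $H$ including the external face. Then $LD(H)\ge\frac25 ME(H)+\frac{12}{5}$.
   Context: A planar map is a planar graph together with an embedding in the plane. $\deg[f]$ is the degree (length of the boundary walk) of the face $f$. $ME(H)$ equals the number of edges that can be added to $H$ while keeping it a simple planar map. *)

(* Defs.v *)
From mathcomp Require Import all_boot all_order all_algebra all_fingroup.
Set Implicit Arguments. Unset Strict Implicit. Unset Printing Implicit Defensive.
Import GRing.Theory Num.Theory.

(* A combinatorial map on a finite set of darts D is given by
   - sigma : the vertex rotation (cyclic order of darts around each vertex),
   - alpha : the edge involution (fixed-point free), pairing the two darts of an edge.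
   Vertices = sigma-orbits, edges = alpha-orbits,
   faces = orbits of the face permutation phi = sigma o alpha. *)

Section Maps.
Variable D : finType.
Variables (sigma alpha : {perm D}).

Definition phi (x : D) : D := sigma (alpha x).

Definition nV : nat := #|[pred x | froots sigma x]|.
Definition nE : nat := #|[pred x | froots alpha x]|.
Definition nF : nat := #|[pred x | froots phi x]|.

Definition edge_involution : Prop :=
  forall x, alpha (alpha x) = x /\ alpha x != x.

Definition map_connected : Prop :=
  forall x y, connect [rel u v | (v == sigma u) || (v == alpha u)] x y.

(* genus 0 (Euler's formula) : the map is planar *)
Definition map_planar : Prop := (nV + nF = nE + 2)%N.

(* simple: no loops and no multiple edges *)
Definition map_simple : Prop :=
  (forall x, ~~ fconnect sigma x (alpha x)) /\
  (forall x y, x != y -> fconnect sigma x y ->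
     ~~ fconnect sigma (alpha x) (alpha y)).

Definition vdeg (x : D) : nat := fingraph.order sigma x.
Definition fdeg (x : D) : nat := fingraph.order phi x.

Definition LD : nat := #|[pred x | froots sigma x && (vdeg x <= 5)%N]|.

Definition ME : int := (\sum_(x | froots phi x) ((fdeg x)%:Z - 3))%R.
End Maps.

(* Main.v *)
Require Import Defs.
From mathcomp Require Import all_boot all_order all_algebra all_fingroup.
From mathcomp Require Import zify.
Import GRing.Theory Num.Theory.

Lemma sum_order (D : finType) (p : {perm D}) :
  (\sum_(x | froots p x) fingraph.order p x = #|D|)%N.
Proof.
have symp : connect_sym (frel p) by apply: fconnect_sym; apply: perm_inj.
symmetry; rewrite -sum1_card (partition_big (froot p) (froots p)) /=; last first.
  by move=> x _; apply: roots_root.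
apply: eq_bigr => r /eqP rr.
rewrite sum1dep_card /fingraph.order; apply: eq_card => y.
rewrite inE.
by rewrite -{1}rr root_connect // symp.
Qed.

Lemma order_alpha (D : finType) (alpha : {perm D}) x :
  edge_involution alpha -> fingraph.order alpha x = 2%N.
Proof.
move=> inv; rewrite /fingraph.order.
have [aa ax] := inv x.
have -> : 2%N = #|pred2 x (alpha x)| by rewrite card2 eq_sym ax.
apply: eq_card => y.
rewrite !inE; apply/idP/idP.
  move=> cxy.
  have cl : closed (frel alpha) [pred z | (z == x) || (z == alpha x)].
    move=> u v /eqP <-; rewrite !inE; apply/idP/idP.
      by case/orP=> /eqP ->; rewrite ?aa eqxx ?orbT.
    case/orP=> /eqP h.
      by rewrite -(perm_inj (etrans h (esym aa))) eqxx orbT.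
    by rewrite (perm_inj h) eqxx.
  by have := closed_connect cl cxy; rewrite !inE eqxx => <-.
case/orP=> /eqP ->; [exact: connect0 | exact: fconnect1].
Qed.

Theorem lemma17 (D : finType) (sigma alpha : {perm D}) :
  edge_involution alpha ->
  map_connected sigma alpha ->
  map_planar sigma alpha ->
  map_simple sigma alpha ->
  (3 <= nV sigma)%N ->
  (5 * (LD sigma)%:Z >= 2 * ME sigma alpha + 12)%R.
Proof.
move=> inv _ pl _ _.
have phiperm : injective (phi sigma alpha).
  by move=> x y; rewrite /phi => /perm_inj /perm_inj.
pose ph := perm phiperm.
have eph : ph =1 phi sigma alpha by move=> x; rewrite permE.
have hE : (2 * nE alpha = #|D|)%N.
  rewrite -(sum_order _ alpha) /nE -sum1_card big_distrr /=.
  by apply: eq_big => // x; move=> _; rewrite (order_alpha _ _ x inv).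
have hF : (\sum_(x | froots (phi sigma alpha) x) fdeg sigma alpha x = #|D|)%N.
  rewrite -(sum_order _ ph) /fdeg.
  have e1 : frel ph =2 frel (phi sigma alpha) by move=> u v /=; rewrite eph.
  apply: eq_big => z; first by rewrite /roots (eq_root e1).
  move=> _; rewrite /fingraph.order. by apply: eq_card => w; rewrite !inE (eq_fconnect eph).
have hD : (\sum_(x | froots sigma x) vdeg sigma x = #|D|)%N by exact: sum_order.
have hV : (6 * nV sigma <= #|D| + 5 * LD sigma)%N.
  have hLD : LD sigma = (\sum_(x | froots sigma x) (vdeg sigma x <= 5))%N.
    rewrite /LD -sum1_card (eq_bigl (fun i => froots sigma i && (vdeg sigma i <= 5)%N)) //.
    by rewrite big_mkcondr /=; apply: eq_bigr => i _; case: ifP.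
  rewrite hLD -hD /nV -sum1_card (eq_bigl (froots sigma)) // big_distrr big_distrr -big_split /=.
  apply: leq_sum => i _; have := fingraph.order_gt0 sigma i; rewrite /vdeg.
  by case: leqP => h /= h0; lia.
have hME : ME sigma alpha = (#|D|%:Z - 3 * (nF sigma alpha)%:Z)%R.
  rewrite /ME sumrB -hF /nF -sum1_card (eq_bigl (froots (phi sigma alpha))) //.
  rewrite -(natz (\sum_(x | _) fdeg _ _ x)) -(natz (\sum_(i | _) 1%N)) !natr_sum mulr_sumr.
  by congr (_ - _)%R; apply: eq_bigr => i _; rewrite ?natz // mulr1.

rewrite hME; move: pl hE hV; rewrite /map_planar.
move: (nV sigma) (nF sigma alpha) (nE alpha) (LD sigma) #|D| => a b c d e.
lia.
Qed.
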